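(* Let $t \geq 4$ be an integer and let $G$ be a finite, simple, connected graph that contains no hole of length at least $t$. Then $t-3$ cops have a winning strategy in the game of cops and robbers on $G$; that is, $c(G) \leq t-3$.
   Context: A hole in a graph is an induced cycle of length at least $4$. The game of cops and robbers on a graph $G$ with $k$ cops is played as follows: each cop chooses a starting vertex, then the single robber chooses a starting vertex; then the players alternate turns, starting with the cops. On the cops' turn, each cop either stays on its vertex or moves to an adjacent vertex; on the robber's turn, the robber stays on his vertex or moves to an adjacent vertex. Both sides have full information. The cops win if at some point a cop occupies the same vertex as the robber; the robber wins if he avoids capture forever. The cop number $c(G)$ is the minimum $k$ such that $k$ cops have a winning strategy on $G$. All graphs are finite, simple and connected. *)

(* Defs.v *)
From mathcomp Require Import all_boot.
Set Implicit Arguments. Unset Strict Implicit. Unset Printing Implicit Defensive.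

Section CopsRobbers.
Variables (T : finType) (e : rel T).

Definition simple_graph : Prop := symmetric e /\ irreflexive e.

Definition connected_graph : Prop := 0 < #|T| /\ forall x y : T, connect e x y.

Definition is_hole (n : nat) (f : 'I_n -> T) : Prop :=
  4 <= n /\ injective f /\
  forall i j : 'I_n,
    e (f i) (f j) = ((val j == (val i).+1 %% n) || (val i == (val j).+1 %% n)).

Definition step_ok (x y : T) : bool := (y == x) || e x y.

Definition cops_move (k : nat) (C C' : {ffun 'I_k -> T}) : Prop :=
  forall i, step_ok (C i) (C' i).

Definition caught (k : nat) (C : {ffun 'I_k -> T}) (r : T) : Prop :=
  exists i, C i = r.

(* cops_win C r : it is the cops' turn, cops at C, robber at r, and the cops
   can force a capture (in finitely many rounds) against every robber play. *)
Inductive cops_win (k : nat) : {ffun 'I_k -> T} -> T -> Prop :=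
| cw_caught : forall C r, caught C r -> cops_win C r
| cw_step : forall C r C', cops_move C C' ->
    (caught C' r \/ (forall r', step_ok r r' -> cops_win C' r')) ->
    cops_win C r.

Definition k_cops_win (k : nat) : Prop :=
  exists C : {ffun 'I_k -> T}, forall r : T, cops_win C r.

End CopsRobbers.

(* Main.v *)
Require Import Defs.
From mathcomp Require Import all_boot zify.
Set Implicit Arguments. Unset Strict Implicit. Unset Printing Implicit Defensive.

Section Aux.
Variables (T : finType) (e : rel T).
Hypothesis esym : symmetric e.
Hypothesis eirr : irreflexive e.
Variable x0 : T.

Lemma closedP (R : rel T) (X : pred T) : (forall x y, X x -> R x y -> X y) ->
  forall a b, X a -> connect R a b -> X b.
Proof.
move=> H a b Xa /connectP [p pth ->].
elim: p a Xa pth => [|z p IH] a Xa //= /andP [Raz pth].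
exact: IH (H _ _ Xa Raz) pth.
Qed.

Lemma exitP (R : rel T) (X : pred T) a b : X a -> connect R a b -> ~~ X b ->
  exists z y, [/\ X z, ~~ X y, R z y & connect R a z].
Proof.
move=> Xa /connectP [p pth ->].
elim: p a Xa pth => [|x p IH] a Xa /=; first by rewrite Xa.
case/andP => Rax pth nXl; case Xx: (X x).
- have [z [y [Xz nXy Rzy Cxz]]] := IH x Xx pth nXl.
  exists z, y; split => //; apply: connect_trans Cxz; exact: connect1.
- by exists a, x; split => //; rewrite Xx.
Qed.

Definition stp (R : rel T) x y := (x == y) || R x y.
Definition walk (R : rel T) a b c := [/\ 0 < size c, nth x0 c 0 = a,
  nth x0 c (size c).-1 = b &
  forall i, i.+1 < size c -> stp R (nth x0 c i) (nth x0 c i.+1)].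

Lemma connect_walk R a b : connect R a b -> exists c, walk R a b c.
Proof.
case/connectP => p pth ->; exists (a :: p); split => //=.
- exact: (nth_last x0 (a :: p)).
- move=> i Hi; move/(pathP x0): pth => H; apply/orP; right; exact: H.
Qed.

Lemma walk_splice R a b c i j : walk R a b c -> i < j -> j < size c ->
  (i = 0 -> nth x0 c j = a) -> (0 < i -> stp R (nth x0 c i.-1) (nth x0 c j)) ->
  walk R a b (take i c ++ drop j c) /\ size (take i c ++ drop j c) < size c.
Proof.
case=> sz0 h0 hl hs ij jc H0 Hi.
have ic : i <= size c by lia.
have sz : size (take i c ++ drop j c) = i + (size c - j).
  by rewrite size_cat size_drop size_takel.
have nthE m : nth x0 (take i c ++ drop j c) m =
   if m < i then nth x0 c m else nth x0 c (j + (m - i)).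
  rewrite nth_cat size_takel //; case: ifP => mi; first by rewrite nth_take.
  by rewrite nth_drop.
split; last by rewrite sz; lia.
split.
- by rewrite sz; lia.
- rewrite nthE; case: ifP => // i0; rewrite addn0; apply: H0; lia.
- rewrite nthE sz; case: ifP => h; first lia.
  have -> : j + ((i + (size c - j)).-1 - i) = (size c).-1 by lia.
  exact: hl.
- move=> m; rewrite sz => hm; rewrite !nthE.
  case: (ltnP m.+1 i) => h1.
  + rewrite (ltn_trans (ltnSn m) h1); apply: hs; lia.
  + case: (ltnP m i) => h2.
    * have em : m = i.-1 by lia.
      have -> : m.+1 - i = 0 by lia.
      rewrite addn0 em; apply: Hi; lia.
    * have -> : j + (m.+1 - i) = (j + (m - i)).+1 by lia.
      apply: hs; lia.
Qed.

Definition good (R : rel T) c := forall i j, i < j -> j < size c ->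
  nth x0 c i != nth x0 c j /\ (i.+1 < j -> ~~ R (nth x0 c i) (nth x0 c j)).

Lemma walk_good R a b c : walk R a b c -> exists c', walk R a b c' /\ good R c'.
Proof.
move: {2}(size c) (leqnn (size c)) => n; elim: n c => [|n IH] c hc W.
  by case: W => sz0; lia.
case: (boolP [exists i : 'I_(size c), exists j : 'I_(size c), (i < j) &&
   ((nth x0 c i == nth x0 c j) || ((i.+1 < j) && R (nth x0 c i) (nth x0 c j)))]).
- case/existsP => i /existsP [j /andP [ij /orP [/eqP eqij | /andP [ij1 Rij]]]].
  + have W0 := W; case: W0 => sz0 h0 hl hs.
    have A1 : (i : nat) = 0 -> nth x0 c j = a by move=> h; rewrite -eqij h.
    have A2 : 0 < i -> stp R (nth x0 c i.-1) (nth x0 c j).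
      move=> h; rewrite -eqij; have := hs i.-1; rewrite prednK //; apply; exact: ltn_ord.
    have [W' sz'] := walk_splice W ij (ltn_ord j) A1 A2.
    apply: IH W'; lia.
  + have [W' sz'] := walk_splice W ij1 (ltn_ord j) (fun h => ltac:(discriminate))
       (fun h => ltac:(rewrite /=; apply/orP; right; exact: Rij)).
    apply: IH W'; lia.
- move=> H; exists c; split => // i j ij jc.
  have ic : i < size c by lia.
  move: H; rewrite negb_exists => /forallP /(_ (Ordinal ic)).
  rewrite negb_exists => /forallP /(_ (Ordinal jc)) /=.
  rewrite ij /= negb_or => /andP [-> H]; split => // ij1; move: H; by rewrite ij1.
Qed.

End Aux.

Section Holes.
Variables (T : finType) (e : rel T) (k : nat).
Hypothesis esym : symmetric e.
Hypothesis eirr : irreflexive e.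
Hypothesis noholes : forall n (f : 'I_n -> T), is_hole e f -> n < k + 3.
Variable x0 : T.

Definition ipath s := forall i j, i < size s -> j < size s ->
  e (nth x0 s i) (nth x0 s j) = (j == i.+1) || (i == j.+1).

Lemma ipath_of s : (forall i, i.+1 < size s -> e (nth x0 s i) (nth x0 s i.+1)) ->
  (forall i j, i.+1 < j -> j < size s -> ~~ e (nth x0 s i) (nth x0 s j)) -> ipath s.
Proof.
move=> H1 H2 i j hi hj.
wlog ij : i j hi hj / i <= j.
  move=> W; case: (leqP i j) => h; first exact: W.
  rewrite esym orbC; apply: W => //; lia.
case: (ltngtP i j) => h; last first.
- by rewrite h eirr; have -> : (j == j.+1) = false by lia.
- lia.
case: (eqVneq j i.+1) => [->|hn]; first by rewrite H1 //; lia.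
rewrite (negbTE (H2 i j _ hj)) /=; lia.
Qed.

Lemma ipath_behead s : ipath s -> ipath (behead s).
Proof.
move=> H i j; rewrite size_behead !nth_behead => hi hj.
rewrite H; lia.
Qed.

Lemma ipath_rev s : ipath s -> ipath (rev s).
Proof.
move=> H i j; rewrite size_rev => hi hj.
rewrite !nth_rev // H; lia.
Qed.

Definition cycadj n i j := (j == i.+1 %% n) || (i == j.+1 %% n).

Lemma modS_eq n i j : i < n -> j < n ->
  (j == i.+1 %% n) = (j == i.+1) || ((i.+1 == n) && (j == 0)).
Proof.
move=> hi hj; case: (ltngtP i.+1 n) => h.
- rewrite modn_small //; lia.
- lia.
- move: hj; rewrite -h modnn; lia.
Qed.

Lemma hole_of_seq c : 4 <= size c -> uniq c ->
  (forall i j, i < size c -> j < size c ->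
     e (nth x0 c i) (nth x0 c j) = cycadj (size c) i j) -> size c < k + 3.
Proof.
move=> h4 u H; apply: (noholes (f := fun i : 'I_(size c) => nth x0 c i)).
split => //; split.
- move=> i j /eqP; rewrite nth_uniq // => /eqP; exact: val_inj.
- move=> i j; exact: H.
Qed.

Lemma glue s q : ipath s -> ipath q -> uniq (s ++ q) -> 2 < size s -> 0 < size q ->
  (forall m, m < size q -> e (nth x0 s 0) (nth x0 q m) = (m == (size q).-1)) ->
  (forall m, m < size q -> e (nth x0 s (size s).-1) (nth x0 q m) = (m == 0)) ->
  (forall i m, 0 < i -> i < (size s).-1 -> m < size q -> ~~ e (nth x0 s i) (nth x0 q m)) ->
  size s + size q < k + 3.
Proof.
move=> ps pq us s3 q1 Hy Hu Hi.
have := @hole_of_seq (s ++ q); rewrite size_cat.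
set ns := size s in s3 Hu Hi *; set nq := size q in q1 Hy Hu Hi *.
apply => //; first lia.
move=> i j hi hj.
wlog ij : i j hi hj / i <= j.
  move=> W; case: (leqP i j) => h; first exact: W.
  rewrite esym /cycadj orbC; apply: W => //; lia.
rewrite /cycadj !modS_eq // !nth_cat.
case: (ltnP i (size s)) => hi'; case: (ltnP j (size s)) => hj'.
- rewrite ps //; lia.
- case: (posnP i) => [i0|ip].
    rewrite i0 Hy; lia.
  case: (eqVneq i (size s).-1) => [iu|iu].
    rewrite iu Hu; lia.
  rewrite (negbTE (Hi _ _ ip _ _)); lia.
- lia.
- rewrite pq; lia.
Qed.

End Holes.

Section Main.
Variables (T : finType) (e : rel T) (k : nat).
Hypothesis esym : symmetric e.
Hypothesis eirr : irreflexive e.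
Hypothesis k_gt0 : 0 < k.
Hypothesis noholes : forall n (f : 'I_n -> T), is_hole e f -> n < k + 3.
Variable x0 : T.

Definition cnb (S : seq T) x := has (fun q => step_ok e q x) S.
Definition er (S : seq T) := [rel x y | e x y && ~~ cnb S x && ~~ cnb S y].
Definition conf (Q : seq T) (p : T) : {ffun 'I_k -> T} := [ffun i : 'I_k => nth p Q i].
Definition comp (S : seq T) r := [set x | connect (er S) r x].

Lemma er_sym S : symmetric (er S).
Proof. by move=> x y /=; rewrite esym andbAC -andbA andbC -!andbA. Qed.

Lemma L_out S a x : ~~ cnb S a -> connect (er S) a x -> ~~ cnb S x.
Proof.
move=> ha; apply: (@closedP T (er S) [pred v | ~~ cnb S v]) ha => v y _ /andP [_ h]; exact: h.
Qed.

Lemma conf_nth (Q : seq T) (p : T) i : nth p Q i = nth p (rcons Q p) i.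
Proof.
rewrite nth_rcons; case: ltnP => // h; rewrite nth_default //; by case: eqP.
Qed.

Lemma catch Q p r : size Q < k -> cnb (rcons Q p) r -> cops_win e (conf Q p) r.
Proof.
move=> hk /hasP [x xin hx].
set j := index x (rcons Q p).
have jk : j < k.
  have : j < size (rcons Q p) by rewrite index_mem.
  rewrite size_rcons => h; exact: leq_trans h hk.
apply: (@cw_step _ _ _ _ _ [ffun i : 'I_k => if val i == j then r else conf Q p i]).
- move=> i; rewrite !ffunE; case: eqP => h.
    by rewrite conf_nth h nth_index.
  by rewrite /step_ok eqxx.
- by left; exists (Ordinal jk); rewrite ffunE /= eqxx.
Qed.

Definition Inv Q p r := [/\ size Q < k, uniq (rcons Q p), ipath e x0 (rcons Q p),
  ~~ cnb (rcons Q p) r &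
  exists w0, [/\ e p w0, ~~ cnb Q w0 & connect (er Q) r w0]].

End Main.

Section Key.
Variables (T : finType) (e : rel T) (k : nat).
Hypothesis esym : symmetric e.
Hypothesis eirr : irreflexive e.
Hypothesis noholes : forall n (f : 'I_n -> T), is_hole e f -> n < k + 3.
Variable x0 : T.

Lemma step_okE x y : step_ok e x y = (y == x) || e x y.
Proof. by []. Qed.
Lemma cnb_cons a (s : seq T) x : cnb e (a :: s) x = step_ok e a x || cnb e s x.
Proof. by []. Qed.
Lemma cnb_rcons a (s : seq T) x : cnb e (rcons s a) x = step_ok e a x || cnb e s x.
Proof. by rewrite /cnb has_rcons. Qed.
Lemma mem_cnb (s : seq T) x : x \in s -> cnb e s x.
Proof. by move=> h; apply/hasP; exists x => //; rewrite step_okE eqxx. Qed.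
Lemma cnb_e (s : seq T) x v : ~~ cnb e s x -> v \in s -> ~~ e v x.
Proof. by move=> /hasPn h /h; rewrite step_okE negb_or => /andP [_ ->]. Qed.

Lemma key (Q : seq T) (p r u w : T) :
  size Q + 1 = k -> uniq (rcons Q p) -> ipath e x0 (rcons Q p) -> ~~ cnb e (rcons Q p) r ->
  e p u -> ~~ cnb e Q u -> e u w -> connect (er e (rcons Q p)) r w ->
  forall y z, connect (er e (rcons Q p)) r z -> e z y -> cnb e (rcons Q p) y ->
  cnb e (rcons (behead (rcons Q p)) u) y.
Proof.
move=> hk uP iP rP pu Qu uw Cw y z Cz zy cy.
have uPn : u \notin rcons Q p.
  rewrite mem_rcons inE; apply/norP; split.
    by apply/negP => /eqP eq; rewrite eq eirr in pu.
  by apply/negP => /mem_cnb h; rewrite h in Qu.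
set P := rcons Q p in uP iP rP Cw Cz cy uPn *.
have zP : ~~ cnb e P z := L_out rP Cz.
have wP : ~~ cnb e P w := L_out rP Cw.
have [p1 [rest eP]] : exists p1 rest, P = p1 :: rest.
  by rewrite /P; case: (Q) => [|a Q']; do 2 eexists.
rewrite eP /=.
case: (boolP (cnb e (rcons rest u) y)) => // ny; exfalso.
move: ny; rewrite cnb_rcons negb_or step_okE negb_or => /andP [/andP [yu uy] ry].
have p1y : e p1 y.
  move: cy; rewrite eP cnb_cons (negbTE ry) orbF step_okE => /orP [/eqP yp1|//].
  by move: zP; rewrite eP cnb_cons step_okE -yp1 esym zy orbT.
pose A v := ~~ cnb e P v || (v == y) || (v == u).
pose eA := [rel a b | e a b && A a && A b].
have CyU : connect eA y u.
  apply: (@connect_trans _ _ z y u).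
    by apply: connect1; rewrite /= /A esym zy eqxx zP !orbT.
  apply: (@connect_trans _ _ w z u); last first.
    by apply: connect1; rewrite /= /A esym uw wP eqxx !orbT.
  have Czr : connect (er e P) z r by rewrite (sym_connect_sym (er_sym esym P)).
  have Czw := connect_trans Czr Cw.
  apply: connect_sub Czw => a b /andP [/andP [eab na] nb]; apply: connect1.
  by rewrite /= /A eab na nb.
have [c Wc] := connect_walk x0 CyU.
have [s [Ws Gs]] := walk_good Wc.
case: Ws => s0 hs0 hsl hss.
have E i : i.+1 < size s -> eA (nth x0 s i) (nth x0 s i.+1).
  move=> hi; have := hss i hi; rewrite /stp.
  by have [/negbTE -> _] := Gs i i.+1 (ltnSn i) hi.
have sz2 : 1 < size s.
  case: (ltnP 1 (size s)) => // h.
  have s1 : size s = 1 by clear -h s0; lia.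
  by move: hsl; rewrite s1 /= hs0 => yu'; rewrite yu' eqxx in yu.
have Av i : i < size s -> A (nth x0 s i).
  move=> hi; case: (ltnP i.+1 (size s)) => h.
    by have /andP [/andP [_ ->] _] := E i h.
  have i0 : 0 < i by clear -h sz2; lia.
  by have := E i.-1; rewrite prednK // => /(_ hi) /andP [_ ->].
have ipS : ipath e x0 s.
  apply: (ipath_of esym eirr) => [i hi|i j hij hj].
    by have /andP [/andP [-> _] _] := E i hi.
  have hi : i < size s by clear -hij hj; lia.
  apply/negP => eij; have [_ /(_ hij)] := Gs i j (ltnW hij) hj.
  by rewrite /= eij Av // Av.
have us : uniq s.
  apply/(uniqP x0) => i j hi hj eq.
  move: hi hj; rewrite !inE => hi hj.
  case: (ltngtP i j) => h //.
    by have [h1 _] := Gs i j h hj; rewrite eq eqxx in h1.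
  by have [h1 _] := Gs j i h hi; rewrite eq eqxx in h1.
have s3 : 2 < size s.
  case: (ltnP 2 (size s)) => // h.
  have s2 : size s = 2 by clear -h sz2; lia.
  have := E 0; rewrite s2 => /(_ isT) /andP [/andP [h1 _] _].
  move: hsl; rewrite s2 /= => hsl.
  by move: h1; rewrite hs0 hsl esym (negbTE uy).
have Int i : 0 < i -> i < (size s).-1 -> ~~ cnb e P (nth x0 s i).
  move=> i0 il; have is0 : i < size s by clear -il; lia.
  have is1 : (size s).-1 < size s by clear -s0; lia.
  have := Av i is0; rewrite /A.
  have [h1 _] := Gs 0 i i0 is0.
  have [h2 _] := Gs i (size s).-1 il is1.
  rewrite hs0 in h1; rewrite hsl in h2.
  by rewrite eq_sym (negbTE h1) (negbTE h2) !orbF.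
have notinP i : i < size s -> nth x0 s i \notin P.
  move=> hi; case: (posnP i) => [->|i0].
    rewrite hs0 eP in_cons negb_or; apply/andP; split.
      by apply/negP => /eqP eq; rewrite eq eirr in p1y.
    by apply/negP => /mem_cnb h; rewrite h in ry.
  case: (ltnP i (size s).-1) => il.
    by apply/negP => /mem_cnb h; move: (Int i i0 il); rewrite h.
  have -> : i = (size s).-1 by clear -hi il; lia.
  by rewrite hsl.
have ucat : uniq (s ++ rev P).
  rewrite cat_uniq us rev_uniq uP andbT /=.
  apply/hasPn => v; rewrite mem_rev => vP; apply/negP => vs.
  have := notinP (index v s); rewrite index_mem nth_index // => /(_ vs).
  by rewrite vP.
have szP : size P = k by rewrite /P size_rcons; clear -hk; lia.
have Hy m : m < size (rev P) -> e (nth x0 s 0) (nth x0 (rev P) m) = (m == (size (rev P)).-1).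
  rewrite size_rev => hm; rewrite nth_rev // hs0.
  have -> : (m == (size P).-1) = (size P - m.+1 == 0) by apply/idP/idP => /eqP h; apply/eqP; clear -hm h; lia.
  have : size P - m.+1 < size P by clear -hm; lia.
  move: (size P - m.+1) => l; rewrite eP => hl; case: l hl => [|l] hl /=.
    by rewrite esym.
  apply/negbTE; rewrite esym; apply: (cnb_e ry); apply: mem_nth; by [].
have Hu m : m < size (rev P) -> e (nth x0 s (size s).-1) (nth x0 (rev P) m) = (m == 0).
  rewrite size_rev => hm; rewrite nth_rev // hsl.
  have hm' : m < (size Q).+1 by move: hm; rewrite /P size_rcons.
  have -> : (m == 0) = (size P - m.+1 == size Q) by rewrite /P size_rcons; apply/idP/idP => /eqP h; apply/eqP; clear -hm' h; lia.
  rewrite /P nth_rcons; case: ltnP => h1.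
    rewrite (negbTE (_ : size (rcons Q p) - m.+1 != size Q)); last by rewrite size_rcons in h1 *; clear -h1; lia.
    apply/negbTE; rewrite esym; apply: (cnb_e Qu); exact: mem_nth.
  case: eqP => h2; first by rewrite esym.
  by move: hm h1 h2; rewrite /P !size_rcons => hm h1 h2; clear -hm h1 h2; lia.
have Hint i m : 0 < i -> i < (size s).-1 -> m < size (rev P) -> ~~ e (nth x0 s i) (nth x0 (rev P) m).
  move=> i0 il hm; rewrite esym; apply: (cnb_e (Int i i0 il)).
  by rewrite -mem_rev; apply: mem_nth.
have := glue esym noholes (ipS) (ipath_rev iP) ucat s3 _ Hy Hu Hint.
rewrite size_rev; move: szP s3; rewrite /P => szP s3'.
have : 0 < size (rcons Q p) by rewrite size_rcons.
move: szP s3'; set a := size s; set b := size (rcons Q p) => szP s3' b0; clear -szP s3' b0; lia.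
Qed.

End Key.

Section Win.
Variables (T : finType) (e : rel T) (k : nat).
Hypothesis esym : symmetric e.
Hypothesis eirr : irreflexive e.
Hypothesis k_gt0 : 0 < k.
Hypothesis noholes : forall n (f : 'I_n -> T), is_hole e f -> n < k + 3.
Variable x0 : T.

Lemma behead_rcons (P : seq T) u : 0 < size P -> behead (rcons P u) = rcons (behead P) u.
Proof. by case: P. Qed.

Lemma ipath_rcons (Q : seq T) p u : ipath e x0 (rcons Q p) -> e p u -> ~~ cnb e Q u ->
  ipath e x0 (rcons (rcons Q p) u).
Proof.
move=> iP pu Qu i j; rewrite size_rcons => hi hj.
wlog ij : i j hi hj / i <= j.
  move=> W; case: (leqP i j) => h; first exact: W.
  rewrite esym orbC; apply: W => //; exact: ltnW.
rewrite !(nth_rcons x0 (rcons Q p)).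
case: (ltnP j (size (rcons Q p))) => hj'.
  by have hi' := leq_ltn_trans ij hj'; rewrite hi' iP.
have ej : j = size (rcons Q p) by move: hj hj'; clear; lia.
rewrite ej eqxx.
case: (ltnP i (size (rcons Q p))) => hi'; last first.
  have -> : i = size (rcons Q p) by move: hi hi' ej ij; clear; lia.
  rewrite eqxx eirr; move: (size (rcons Q p)) => n; clear; lia.
rewrite nth_rcons; move: hi'; rewrite size_rcons => hi'.
case: (ltnP i (size Q)) => hiQ.
  rewrite (negbTE (cnb_e Qu (mem_nth x0 hiQ))).
  move: hiQ; clear; lia.
have -> : i = size Q by move: hiQ hi'; clear; lia.
rewrite eqxx pu; clear; lia.
Qed.

Lemma win_inv n Q p r : #|comp e (rcons Q p) r| <= n -> Inv e k x0 Q p r ->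
  cops_win e (conf k Q p) r.
Proof.
elim: n Q p r => [|n IH] Q p r hn [hk uP iP rP [w0 [pw0 Qw0 Cw0]]].
  have : r \in comp e (rcons Q p) r by rewrite inE connect0.
  by move: hn; rewrite leqn0 => /eqP/cards0_eq ->; rewrite inE.
have X0 : ~~ [pred x | connect (er e (rcons Q p)) r x] w0.
  apply/negP => /= C0; have := L_out rP C0.
  by rewrite cnb_rcons step_okE pw0 orbT.
have [z [u [zC uC zu CQz]]] := exitP (connect0 _ r) Cw0 X0.
have CQu : connect (er e Q) r u := connect_trans CQz (connect1 zu).
move: zu => /andP [/andP [ezu Qz] Qu].
have zP : ~~ cnb e (rcons Q p) z := L_out rP zC.
have pu : e p u.
  have : cnb e (rcons Q p) u.
    case: (boolP (cnb e (rcons Q p) u)) => // h; exfalso.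
    have ezu' : er e (rcons Q p) z u by rewrite /= ezu zP h.
    have Cu : connect (er e (rcons Q p)) r u := connect_trans zC (@connect1 _ (er e (rcons Q p)) _ _ ezu').
    by move: uC; rewrite /= Cu.
  rewrite cnb_rcons (negbTE Qu) orbF step_okE => /orP [/eqP up|//].
  by move: zP; rewrite cnb_rcons step_okE -up esym ezu orbT.
have uw : e u z by rewrite esym.
set P := rcons Q p in hn uP iP rP X0 zC zP uC pu *.
have uPu : uniq (rcons P u).
  rewrite rcons_uniq uP andbT /P mem_rcons inE; apply/norP; split.
    by apply/negP => /eqP eq; rewrite eq eirr in pu.
  by apply/negP => /mem_cnb h; rewrite h in Qu.
have iPu : ipath e x0 (rcons P u) by apply: ipath_rcons.
have szP : 0 < size P by rewrite /P size_rcons.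
pose sh := (size Q).+1 == k.
pose Q' := if sh then behead P else P.
have hk' : size Q' < k.
  rewrite /Q' /sh; case: ifP => /eqP h; rewrite ?size_behead /P size_rcons /=.
    by move: h; clear; lia.
  by move: h hk; clear; move: (size Q) => m; lia.
have uQ' : uniq (rcons Q' u).
  rewrite /Q'; case: ifP => _ //; rewrite -behead_rcons //.
  by move: uPu; case: (rcons P u) => //= a s /andP [_ ->].
have iQ' : ipath e x0 (rcons Q' u).
  rewrite /Q'; case: ifP => _ //; rewrite -behead_rcons //; exact: ipath_behead.
have sub' x : cnb e Q' x -> cnb e P x.
  rewrite /Q'; case: ifP => _ // h; move: h szP.
  by case: (P) => // a s h _; rewrite cnb_cons; apply/orP; right; exact: h.
have K : forall y z, connect (er e P) r z -> e z y -> cnb e P y -> cnb e (rcons Q' u) y.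
  rewrite /Q' /sh; case: ifP => [/eqP hsh | _].
    apply: (key esym eirr noholes _ uP iP rP pu Qu uw zC); by rewrite addn1.
  by move=> y z0 _ _ h; rewrite cnb_rcons h orbT.
have mv : cops_move e (conf k Q p) (conf k Q' u).
  move=> i; rewrite /conf !ffunE conf_nth -/P.
  have ik := ltn_ord i.
  rewrite /Q' /sh; case: ifP => [/eqP hsh | ns].
    rewrite nth_behead.
    case: (ltnP i.+1 (size P)) => h.
      rewrite (set_nth_default x0 u h) (set_nth_default x0 p (ltnW h)).
      rewrite step_okE iP //; last exact: ltnW.
      by apply/orP; right; apply/orP; left.
    rewrite (nth_default u h).
    have -> : (i : nat) = size Q by move: h ik hsh; rewrite /P size_rcons; clear; lia.
    by rewrite /P nth_rcons ltnn eqxx step_okE pu orbT.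
  case: (ltnP i (size P)) => h.
    by rewrite (set_nth_default x0 u h) (set_nth_default x0 p h) step_okE eqxx.
  by rewrite !nth_default // step_okE pu orbT.
apply: (cw_step mv); right => r' hr'.
case: (boolP (cnb e (rcons Q' u) r')) => [h|nr']; first exact: catch hk' h.
have r'C : connect (er e P) r r'.
  move: hr'; rewrite step_okE => /orP [/eqP ->|err']; first exact: connect0.
  apply: connect1; rewrite /= err' rP /=.
  apply/negP => h; move: nr'; by rewrite (K r' r (connect0 _ _) err' h).
apply: (IH Q' u r').
- have sub : comp e (rcons Q' u) r' \subset comp e P r.
    apply/subsetP => x; rewrite !inE => Cx.
    apply: (@closedP T (er e (rcons Q' u)) [pred x | connect (er e P) r x] _ r' x r'C Cx).
    move=> a b /= Ca /andP [/andP [eab _] nb].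
    have eab' : er e P a b.
      rewrite /= eab (L_out rP Ca) /=.
      apply: contra nb; exact: K Ca eab.
    exact: connect_trans Ca (@connect1 _ (er e P) _ _ eab').
  have wout : z \notin comp e (rcons Q' u) r'.
    rewrite inE; apply/negP => C'; have := L_out nr' C'.
    by rewrite cnb_rcons step_okE uw orbT.
  have wC' : z \in comp e P r by rewrite inE.
  have hlt : #|comp e (rcons Q' u) r'| < #|comp e P r|.
    by apply: proper_card; apply/properP; split => //; exists z.
  by rewrite -ltnS; exact: leq_trans hlt hn.
- split => //; exists z; split => //.
    by apply: contra zP; exact: sub'.
  have Cr'z : connect (er e P) r' z.
    apply: connect_trans zC.
    by rewrite (sym_connect_sym (er_sym esym P)).
  apply: connect_sub Cr'z => a b /andP [/andP [eab na] nb]; apply: connect1.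
  by rewrite /= eab (contra (@sub' a) na) (contra (@sub' b) nb).
Qed.

Lemma start : connected_graph e -> k_cops_win e k.
Proof.
case=> _ conn; exists (conf k [::] x0) => r.
case: (boolP (cnb e [:: x0] r)) => h; first exact: (@catch _ _ _ [::] x0 r k_gt0 h).
apply: (@win_inv #|comp e [:: x0] r|) => //.
have eqr : er e [::] =2 e by move=> a b /=; rewrite !andbT.
have Cr : connect (er e [::]) r x0 by rewrite (eq_connect eqr); exact: conn.
have nx : ~~ [pred x | x != x0] x0 by rewrite /= eqxx.
have rx : [pred x | x != x0] r.
  by move: h; rewrite cnb_cons step_okE !negb_or => /andP [/andP [h1 _] _].
have [z [y [zx yx zy Crz]]] := exitP rx Cr nx.
move: yx zx zy; rewrite /= negbK => /eqP -> zx /andP [/andP [zx0 _] _].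
split => //.
- move=> i j; rewrite /= => hi hj.
  have -> : i = 0 by move: hi; clear; lia.
  have -> : j = 0 by move: hj; clear; lia.
  by rewrite eirr.
- by exists z; split => //; rewrite esym.
Qed.

End Win.

Unset Implicit Arguments.

Theorem mainTheorem1 (t : nat) (T : finType) (e : rel T) :
  4 <= t ->
  simple_graph e ->
  connected_graph e ->
  (forall (n : nat) (f : 'I_n -> T), is_hole e f -> n < t) ->
  k_cops_win e (t - 3).
Proof.
move=> ht [esym eirr] cg nh.
have cg' := cg; case: cg' => T0 _.
case/card_gt0P: T0 => x0 _.
apply: (start esym eirr _ _ x0 cg).
- by move: ht; clear; lia.
- move=> n f hf; have := nh n f hf.
  have -> : t - 3 + 3 = t by move: ht; clear; lia.
  by [].
Qed.
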